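(* Let $\Lambda$ be a row-finite source-free $k$-graph. In any $\Lambda$-semibranching function system on a measure space $(X,\mu)$, if $(\lambda, \nu)$ is a periodic pair, then $\mu (R_\lambda \,\Delta\, R_\nu) = 0$.
   Context: A $k$-graph is a countable small category $\Lambda$ with a functor $d:\Lambda\to\mathbb{N}^k$ with unique factorization; vertices $\Lambda^0$, range/source $r,s$; row-finite/source-free: paths of a given degree and range form a finite/nonempty set. $\Lambda^\infty$ is the set of infinite paths, $Z(v)$ those with range $v$, and $\lambda x$ denotes prefixing of $\lambda$ to $x\in Z(s(\lambda))$. A pair $(\lambda,\nu)\in\Lambda\times\Lambda$ is periodic if $s(\lambda)=s(\nu)$ and $\lambda x=\nu x$ for all $x\in Z(s(\lambda))$. A $\Lambda$-semibranching function system on $(X,\mu)$: measurable $D_\lambda$, prefixing maps $\tau_\lambda:D_\lambda\to X$, $R_\lambda=\tau_\lambda(D_\lambda)$, coding maps $\tau^m$, such that for each $m\in\mathbb{N}^k$ $\{\tau_\lambda:d(\lambda)=m\}$ is a semibranching function system with coding map $\tau^m$ ($0<\mu(D_\lambda)<\infty$, $\mu(R_\lambda)<\infty$, $\mu(R_\lambda\cap R_\eta)=0$ for distinct $\lambda,\eta$ of degree $m$, $\mu(X\setminus\bigcup_{d(\lambda)=m}R_\lambda)=0$, $d(\mu\circ\tau_\lambda)/d\mu>0$ a.e. on $D_\lambda$, $\tau^m\circ\tau_\lambda=\mathrm{id}$); $\tau_v=\mathrm{id}$ for $v\in\Lambda^0$; for $\nu\in s(\lambda)\Lambda$, $R_\nu\subseteq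 D_\lambda$ a.e. and $\tau_\lambda\tau_\nu=\tau_{\lambda\nu}$ a.e.; $\tau^m\tau^n=\tau^{m+n}$. *)

(* Defs.v *)
From HB Require Import structures.
From mathcomp Require Import all_boot all_order all_algebra.
From mathcomp Require Import all_classical all_reals all_analysis.
From mathcomp Require Import measurable_realfun.
Set Implicit Arguments. Unset Strict Implicit. Unset Printing Implicit Defensive.
Import Order.TTheory GRing.Theory Num.Theory.
Local Open Scope classical_set_scope.
Local Open Scope ring_scope.

Definition Nk (k : nat) := {ffun 'I_k -> nat}.
Definition zeroNk (k : nat) : Nk k := [ffun _ => 0%N].
Definition addNk (k : nat) (m n : Nk k) : Nk k := [ffun i => (m i + n i)%N].
Definition subNk (k : nat) (m n : Nk k) : Nk k := [ffun i => (m i - n i)%N].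
Definition leNk (k : nat) (m n : Nk k) : Prop := forall i, (m i <= n i)%N.

(* A countable small category (objects [kV], morphisms [kP], identities [kid],
   composition [kcomp l m] = "l m", meaningful when s l = r m) with a degree
   functor [kd] to N^k satisfying unique factorization. *)
Record kgraph (k : nat) := KGraph {
  kV : countType;
  kP : countType;
  kr : kP -> kV;
  ks : kP -> kV;
  kid : kV -> kP;
  kcomp : kP -> kP -> kP;
  kd : kP -> Nk k;
  kr_id : forall v, kr (kid v) = v;
  ks_id : forall v, ks (kid v) = v;
  kcomp_idl : forall l, kcomp (kid (kr l)) l = l;
  kcomp_idr : forall l, kcomp l (kid (ks l)) = l;
  kr_comp : forall l m, ks l = kr m -> kr (kcomp l m) = kr l;
  ks_comp : forall l m, ks l = kr m -> ks (kcomp l m) = ks m;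
  kcompA : forall l m n, ks l = kr m -> ks m = kr n ->
     kcomp l (kcomp m n) = kcomp (kcomp l m) n;
  kd_id : forall v, kd (kid v) = zeroNk k;
  kd_comp : forall l m, ks l = kr m -> kd (kcomp l m) = addNk (kd l) (kd m);
  kfactor : forall l (m n : Nk k), kd l = addNk m n ->
     exists mu nu, [/\ ks mu = kr nu, l = kcomp mu nu, kd mu = m & kd nu = n];
  kfactor_uniq : forall l (m n : Nk k) mu nu mu' nu',
     ks mu = kr nu -> l = kcomp mu nu -> kd mu = m -> kd nu = n ->
     ks mu' = kr nu' -> l = kcomp mu' nu' -> kd mu' = m -> kd nu' = n ->
     mu = mu' /\ nu = nu'
}.

Section KGraphDefs.
Variables (k : nat) (G : kgraph k).

Definition row_finite : Prop :=
  forall (v : kV G) (m : Nk k), finite_set [set l : kP G | kr l = v /\ kd l = m].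
Definition source_free : Prop :=
  forall (v : kV G) (m : Nk k), exists l : kP G, kr l = v /\ kd l = m.

(* Infinite paths: degree-preserving functors Ω_k -> Λ, where Ω_k has
   objects N^k and morphisms (m,n) with m <= n, of degree n - m.
   Values of x at pairs (m,n) with ~ m <= n are irrelevant. *)
Definition infinite_path (x : Nk k -> Nk k -> kP G) : Prop :=
  (forall m n, leNk m n -> kd (x m n) = subNk n m) /\
  (forall m n p, leNk m n -> leNk n p ->
      ks (x m n) = kr (x n p) /\ kcomp (x m n) (x n p) = x m p).

Definition ipath_range (x : Nk k -> Nk k -> kP G) : kV G :=
  kr (x (zeroNk k) (zeroNk k)).

(* [prefixed l x y] : y is the infinite path l x, i.e. y(0, d l) = l and
   y(d l + m, d l + n) = x(m, n) for m <= n. *)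
Definition prefixed (l : kP G) (x y : Nk k -> Nk k -> kP G) : Prop :=
  [/\ infinite_path y,
      y (zeroNk k) (kd l) = l &
      forall m n, leNk m n -> y (addNk (kd l) m) (addNk (kd l) n) = x m n].

Definition periodic_pair (l n : kP G) : Prop :=
  ks l = ks n /\
  forall x, infinite_path x -> ipath_range x = ks l ->
    exists y, prefixed l x y /\ prefixed n x y.

End KGraphDefs.

Section SBFS.
Context (k : nat) (G : kgraph k) (dsp : measure_display) (T : measurableType dsp)
        (R : realType) (mu : {measure set T -> \bar R}).
Local Open Scope ereal_scope.

Definition sbfs_range (D : kP G -> set T) (tau : kP G -> T -> T) (l : kP G) : set T :=
  tau l @` D l.

Record semibranching (D : kP G -> set T) (tau : kP G -> T -> T)
    (coding : Nk k -> T -> T) : Prop := {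
  (* each {tau_l : d l = m} is a semibranching function system with coding map tau^m *)
  sb_Dmeas : forall l, measurable (D l);
  sb_Rmeas : forall l, measurable (sbfs_range D tau l);
  sb_Dpos : forall l, 0 < mu (D l);
  sb_Dfin : forall l, mu (D l) < +oo;
  sb_Rfin : forall l, mu (sbfs_range D tau l) < +oo;
  sb_disj : forall l e, kd l = kd e -> l <> e ->
     mu (sbfs_range D tau l `&` sbfs_range D tau e) = 0;
  sb_cover : forall m : Nk k,
     mu (~` [set x | exists l, kd l = m /\ sbfs_range D tau l x]) = 0;
  (* mu o tau_l (A |-> mu (tau_l A), A ⊆ D_l) is a measure on D_l ... *)
  sb_img_meas : forall l A, measurable A -> A `<=` D l -> measurable (tau l @` A);
  sb_RN : forall l : kP G, exists f : T -> \bar R,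
     [/\ measurable_fun setT f, (forall x, 0 <= f x),
         (forall A, measurable A -> A `<=` D l ->
            mu (tau l @` A) = \int[mu]_(x in A) f x) &
         {ae mu, forall x, D l x -> 0 < f x}];
  sb_coding : forall l x, D l x -> coding (kd l) (tau l x) = x;
  sb_vertex : forall v x, D (kid v) x -> tau (kid v) x = x;
  sb_RD : forall l n, kr n = ks l -> mu (sbfs_range D tau n `\` D l) = 0;
  (* tau_l tau_nu = tau_{l nu} a.e. (as partial maps: domains agree a.e.
     and the maps agree a.e. on the common domain) *)
  sb_compD : forall l n, kr n = ks l ->
     mu ((D n `\` D (kcomp l n)) `|` (D (kcomp l n) `\` D n)) = 0;
  sb_comp : forall l n, kr n = ks l ->
     {ae mu, forall x, D n x -> tau l (tau n x) = tau (kcomp l n) x};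
  sb_codingD : forall m n x, coding m (coding n x) = coding (addNk m n) x
}.

End SBFS.

(* Main.v *)
Require Import Defs.
From HB Require Import structures.
From mathcomp Require Import all_boot all_order all_algebra.
From mathcomp Require Import all_classical all_reals all_analysis.
From mathcomp Require Import measurable_realfun.
From mathcomp Require Import zify.
Notation kcomp := Defs.kcomp.
Set Implicit Arguments. Unset Strict Implicit. Unset Printing Implicit Defensive.

Section KG.
Variables (k : nat) (G : kgraph k).
Implicit Types (a b c : kP G) (m n p : Nk k).

Lemma leNk_refl m : leNk m m. Proof. by move=> i. Qed.
Lemma leNk_trans m n p : leNk m n -> leNk n p -> leNk m p.
Proof. by move=> H1 H2 i; apply: leq_trans (H1 i) (H2 i). Qed.
Lemma leNk0 m : leNk (zeroNk k) m. Proof. by move=> i; rewrite ffunE. Qed.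
Lemma leNk_addr m n : leNk m (addNk m n). Proof. by move=> i; rewrite ffunE leq_addr. Qed.
Lemma addNk0 m : addNk m (zeroNk k) = m.
Proof. by apply/ffunP => i; rewrite !ffunE addn0. Qed.
Lemma addNkC m n : addNk m n = addNk n m.
Proof. by apply/ffunP => i; rewrite !ffunE addnC. Qed.
Lemma subNk0 m : subNk m (zeroNk k) = m.
Proof. by apply/ffunP => i; rewrite !ffunE subn0. Qed.
Lemma subNkK m n : leNk m n -> addNk m (subNk n m) = n.
Proof. by move=> H; apply/ffunP => i; rewrite !ffunE subnKC. Qed.
Lemma subNk_add m n : subNk (addNk m n) m = n.
Proof. by apply/ffunP => i; rewrite !ffunE addKn. Qed.

Definition facP a m (pr : kP G * kP G) :=
  [/\ ks (fst pr) = kr (snd pr), a = kcomp (fst pr) (snd pr), kd (fst pr) = m & kd (snd pr) = subNk (kd a) m].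

Definition fac a m : kP G * kP G :=
  match pselect (exists pr, facP a m pr) with
  | left H => proj1_sig (cid H)
  | right _ => (a, a) end.

Lemma fac_spec a m : leNk m (kd a) -> facP a m (fac a m).
Proof.
move=> H; rewrite /fac; case: pselect => [H'|H'].
  by case: (cid H').
exfalso; apply: H'.
have [mu [nu [h1 h2 h3 h4]]] := kfactor (esym (subNkK H)).
by exists (mu, nu).
Qed.

Lemma fac_uniq a m b c : ks b = kr c -> a = kcomp b c -> kd b = m -> fac a m = (b, c).
Proof.
move=> h1 h2 h3.
have Hd : kd a = addNk m (kd c) by rewrite h2 kd_comp // h3.
have Hle : leNk m (kd a) by rewrite Hd; apply: leNk_addr.
have [g1 g2 g3 g4] := fac_spec Hle.
have h4 : kd c = subNk (kd a) m by rewrite Hd subNk_add.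
have [e1 e2] := kfactor_uniq g1 g2 g3 g4 h1 h2 h3 h4.
by rewrite -e1 -e2 -surjective_pairing.
Qed.

Definition pre a m := (fst (fac a m)).

Lemma kd_pre a m : leNk m (kd a) -> kd (pre a m) = m.
Proof. by move=> H; have [] := fac_spec H. Qed.

Lemma pre_pre b n p : leNk n p -> leNk p (kd b) -> pre (pre b p) n = pre b n.
Proof.
move=> Hnp Hpb.
have [g1 g2 g3 g4] := fac_spec Hpb.
have Hn : leNk n (kd (fst (fac b p))) by rewrite g3.
have [f1 f2 f3 f4] := fac_spec Hn.
rewrite /pre.
set P := (fst (fac b p)) in g1 g2 g3 g4 Hn f1 f2 f3 f4 *.
set S := (snd (fac b p)) in g1 g2 g3 g4 *.
set A := (fst (fac P n)) in f1 f2 f3 f4 *.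
set C := (snd (fac P n)) in f1 f2 f3 f4 *.
have hCS : ks C = kr S by rewrite -g1 f2 ks_comp.
have -> : fac b n = (A, kcomp C S).
  apply: fac_uniq => //.
    by rewrite kr_comp.
  by rewrite g2 f2 kcompA.
by [].
Qed.

Variable Hsf : source_free G.

Definition ones : Nk k := [ffun _ => 1%N].
Definition ext a : kP G := proj1_sig (cid (Hsf (ks a) ones)).
Lemma ext_spec a : kr (ext a) = ks a /\ kd (ext a) = ones.
Proof. by rewrite /ext; case: cid. Qed.

Definition chain a N := iter N (fun b => kcomp b (ext b)) a.

Lemma kd_chain a N i : kd (chain a N) i = (kd a i + N)%N.
Proof.
elim: N => [|N IH] /=; first by rewrite addn0.
have [e1 e2] := ext_spec (chain a N).
rewrite kd_comp ?e1 // ffunE IH e2 ffunE. by rewrite -addnA ssrnat.addn1 addnS.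
Qed.

Lemma pre_step b m : leNk m (kd b) -> pre (kcomp b (ext b)) m = pre b m.
Proof.
move=> H; have [g1 g2 g3 g4] := fac_spec H.
have [e1 e2] := ext_spec b.
have hS : ks (snd (fac b m)) = kr (ext b) by rewrite e1 [in RHS]g2 ks_comp.
rewrite /pre (@fac_uniq _ _ (fst (fac b m)) (kcomp (snd (fac b m)) (ext b))) //.
- by rewrite kr_comp.
- by rewrite {1}g2 -kcompA.
Qed.

Lemma pre_chain a N d m : leNk m (kd (chain a N)) ->
  pre (chain a (d + N)) m = pre (chain a N) m.
Proof.
move=> H; elim: d => [//|d IH].
rewrite addSn /= pre_step // => i.
by apply: leq_trans (H i) _; rewrite !kd_chain leq_add2l leq_addl.
Qed.

Definition Nof m := (\max_(i < k) m i)%N.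

Lemma Nof_ge m i : (m i <= Nof m)%N.
Proof. exact: leq_bigmax. Qed.

Lemma Nof_mono m n : leNk m n -> (Nof m <= Nof n)%N.
Proof.
move=> H; apply/bigmax_leqP => i _.
exact: leq_trans (H i) (Nof_ge n i).
Qed.

Definition ipx a (m n : Nk k) : kP G := (fac (pre (chain a (Nof n)) n) m).2.

Lemma le_chain a n N : (Nof n <= N)%N -> leNk n (kd (chain a N)).
Proof.
move=> H i; rewrite kd_chain.
by apply: leq_trans (leq_trans (Nof_ge n i) H) _; rewrite leq_addl.
Qed.

Lemma ipx_seg a m n N : (Nof n <= N)%N ->
  ipx a m n = (fac (pre (chain a N) n) m).2.
Proof.
move=> H; rewrite /ipx.
have -> : N = (N - Nof n + Nof n)%N by rewrite subnK.
by rewrite pre_chain //; apply: le_chain.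
Qed.

Lemma ipx_inf a : infinite_path (ipx a).
Proof.
split.
  move=> m n H; rewrite /ipx.
  have Hn := le_chain a (leqnn (Nof n)).
  have H' : leNk m (kd (pre (chain a (Nof n)) n)) by rewrite kd_pre.
  by have [_ _ _ ->] := fac_spec H'; rewrite kd_pre.
move=> m n p Hmn Hnp.
have Hp := le_chain a (leqnn (Nof p)).
rewrite (ipx_seg a m (Nof_mono Hnp)) (ipx_seg a n (leqnn _)) /ipx.
set b := chain a (Nof p).
rewrite -(pre_pre Hnp Hp).
set P := pre b p.
have HP : kd P = p by rewrite kd_pre.
have Hn : leNk n (kd P) by rewrite HP.
have [g1 g2 g3 g4] := fac_spec Hn.
have Hm : leNk m (kd (pre P n)) by rewrite kd_pre.
have [f1 f2 f3 f4] := fac_spec Hm.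
rewrite /pre in f1 f2 f3 f4 Hm *.
set A' := (fst (fac P n)) in g1 g2 g3 g4 f1 f2 f3 f4 Hm *.
set C := (snd (fac P n)) in g1 g2 g3 g4 *.
set A := (fst (fac A' m)) in f1 f2 f3 f4 *.
set B := (snd (fac A' m)) in f1 f2 f3 f4 *.
have hBC : ks B = kr C by rewrite -g1 f2 ks_comp.
split => //.
rewrite (@fac_uniq P m A (kcomp B C)) //.
- by rewrite kr_comp.
- by rewrite g2 f2 kcompA.
Qed.

Lemma ipx_0d a : ipx a (zeroNk k) (kd a) = a.
Proof.
rewrite (ipx_seg a _ (leq_addl 0 _)) /=.
have E := @pre_chain a 0 (Nof (kd a)) (kd a) (leNk_refl _).
rewrite addn0 in E; rewrite E /=.
rewrite /pre (@fac_uniq a (kd a) a (kid (ks a))) ?kcomp_idr ?kr_id //=.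
rewrite (@fac_uniq a (zeroNk k) (kid (kr a)) a) ?kcomp_idl ?ks_id ?kd_id //.
Qed.

Lemma ipx_range a : ipath_range (ipx a) = kr a.
Proof.
have [_ H] := ipx_inf a.
have [h1 h2] := H (zeroNk k) (zeroNk k) (kd a) (leNk_refl _) (leNk0 _).
rewrite /ipath_range -{2}(ipx_0d a) -h2 kr_comp //.
Qed.

Lemma periodic_fact (l n : kP G) : periodic_pair l n ->
  forall e, kr e = ks l -> kd e = kd n ->
  exists z, [/\ ks n = kr z, kcomp l e = kcomp n z & kd z = kd l].
Proof.
move=> [Hs Hp] e He Hde.
have He' : ipath_range (ipx e) = ks l by rewrite ipx_range.
have [y [[Hy Hyl Hyx] [_ Hyn Hyx']]] := Hp _ (ipx_inf e) He'.
have [Hyd Hyc] := Hy.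
have [Hxd _] := ipx_inf e.
have E1 := Hyx' _ _ (leNk0 (kd l)); rewrite addNk0 in E1.
have X : ipx e (zeroNk k) (kd n) = e by rewrite -Hde ipx_0d.
have E2 := Hyx _ _ (leNk0 (kd n)); rewrite addNk0 X in E2.
exists (ipx e (zeroNk k) (kd l)); split.
- have [h1 _] := Hyc (zeroNk k) (kd n) (addNk (kd n) (kd l)) (leNk0 _) (leNk_addr _ _).
  by rewrite -E1 -h1 Hyn.
- have [_ h1] := Hyc (zeroNk k) (kd l) (addNk (kd l) (kd n)) (leNk0 _) (leNk_addr _ _).
  have [_ h2] := Hyc (zeroNk k) (kd n) (addNk (kd n) (kd l)) (leNk0 _) (leNk_addr _ _).
  rewrite Hyl E2 in h1; rewrite Hyn E1 in h2.
  by rewrite h1 h2 addNkC.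
- by rewrite Hxd ?subNk0 //; apply: leNk0.
Qed.

End KG.

Section M.
Local Open Scope classical_set_scope.
Local Open Scope ring_scope.
Context (k : nat) (G : kgraph k) (dsp : measure_display) (T : measurableType dsp)
  (R : realType) (mu : {measure set T -> \bar R})
  (D : kP G -> set T) (tau : kP G -> T -> T) (coding : Nk k -> T -> T)
  (Hsb : semibranching mu D tau coding).
Local Open Scope classical_set_scope.
Local Open Scope ereal_scope.
Local Notation Rg := (sbfs_range D tau).

Lemma negl_countP (I : countType) (P : I -> Prop) (F : I -> set T) :
  (forall i, P i -> mu.-negligible (F i)) ->
  mu.-negligible [set x | exists i, P i /\ F i x].
Proof.
move=> H.
pose F' := fun n => if @unpickle I n is Some i then [set x | P i /\ F i x] else set0.
apply: (negligibleS _ (negligible_bigcup (F := F') _)).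
  by move=> x [i Fi]; exists (pickle i) => //; rewrite /F' pickleK.
move=> n; rewrite /F'; case: unpickle => [i|]; last exact: negligible_set0.
case: (pselect (P i)) => Pi.
  by apply: negligibleS (H i Pi) => x [].
by apply: negligibleS (negligible_set0 mu) => x [].
Qed.

Lemma meas_countP (I : countType) (P : I -> Prop) (F : I -> set T) :
  (forall i, measurable (F i)) ->
  measurable [set x | exists i, P i /\ F i x].
Proof.
move=> H.
pose F' := fun n => if @unpickle I n is Some i then
   (if pselect (P i) then F i else set0) else set0.
have -> : [set x | exists i, P i /\ F i x] = \bigcup_n F' n.
  apply/seteqP; split.
    move=> x [i [Pi Fi]]; exists (pickle i) => //; rewrite /F' pickleK.
    by case: pselect.
  move=> x [n _]; rewrite /F'; case E: unpickle => [i|] //.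
  by case: pselect => // Pi Fi; exists i.
apply: bigcupT_measurable => n; rewrite /F'; case: unpickle => [i|]; last exact: measurable0.
case: pselect => _ /=; [exact: H | exact: measurable0].
Qed.

Lemma img_null (r : kP G) N : mu.-negligible N -> mu.-negligible (tau r @` (N `&` D r)).
Proof.
case=> M [mM M0 NM].
have mM' : measurable (M `&` D r) := measurableI _ _ mM (sb_Dmeas Hsb r).
have [f [mf f0 Hf _]] := sb_RN Hsb r.
exists (tau r @` (M `&` D r)); split.
- exact: (sb_img_meas Hsb mM' (@subIsetr _ _ _)).
- rewrite (Hf _ mM' (@subIsetr _ _ _)); apply: null_set_integral => //.
    exact: measurable_funTS.
  apply/(negligibleP mu mM'); apply: negligibleS (@subIsetl _ _ _) _.
  by exists M; split.
- by move=> _ [x [Nx Dx] <-]; exists x => //; split => //; apply: NM.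
Qed.

Lemma Rg_vertex v : Rg (kid v) = D (kid v).
Proof.
apply/seteqP; split.
  by move=> _ [y Dy <-]; rewrite (sb_vertex Hsb Dy).
by move=> x Dx; exists x => //; rewrite (sb_vertex Hsb Dx).
Qed.

Lemma negl_RD (r : kP G) : mu.-negligible (Rg r `\` D (kid (kr r))).
Proof.
apply/negligibleP.
  by apply: measurableD; [exact: (sb_Rmeas Hsb _) | exact: (sb_Dmeas Hsb _)].
by apply: (sb_RD Hsb); rewrite ks_id.
Qed.

Lemma negl_DD (r : kP G) : mu.-negligible (D r `\` D (kid (ks r))).
Proof.
have H := sb_compD Hsb (l := r) (n := kid (ks r)) (kr_id _).
rewrite kcomp_idr in H.
apply: (negligibleS (@subsetUr _ (D (kid (ks r)) `\` D r) _)).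
apply/negligibleP => //.
by apply: measurableU; apply: measurableD; exact: (sb_Dmeas Hsb _).
Qed.

Lemma negl_vv v w : v <> w -> mu.-negligible (D (kid v) `&` D (kid w)).
Proof.
move=> vw.
have H := sb_disj Hsb (l := kid v) (e := kid w).
rewrite !Rg_vertex !kd_id in H.
apply/negligibleP; first by apply: measurableI; exact: (sb_Dmeas Hsb _).
apply: H => // E; apply: vw; by rewrite -(kr_id v) E kr_id.
Qed.

Lemma negl_disj a b : kd a = kd b -> a <> b -> mu.-negligible (Rg a `&` Rg b).
Proof.
move=> H1 H2; apply/negligibleP; first by apply: measurableI; exact: (sb_Rmeas Hsb _).
exact: (sb_disj Hsb H1 H2).
Qed.

Definition Cov m := [set x | exists l, kd l = m /\ Rg l x].

Lemma negl_cover m : mu.-negligible (~` Cov m).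
Proof.
apply/negligibleP; last exact: (sb_cover Hsb m).
apply: measurableC; apply: meas_countP => i; exact: (sb_Rmeas Hsb _).
Qed.

Lemma negl_comp a b : kr b = ks a ->
  mu.-negligible [set x | D b x /\ (~ D (kcomp a b) x \/ tau a (tau b x) <> tau (kcomp a b) x)].
Proof.
move=> hab.
have H1 := sb_compD Hsb hab.
have H2 := sb_comp Hsb hab.
have N1 : mu.-negligible (D b `\` D (kcomp a b)).
  apply: (negligibleS (@subsetUl _ _ (D (kcomp a b) `\` D b))).
  apply/negligibleP => //.
  by apply: measurableU; apply: measurableD; exact: (sb_Dmeas Hsb _).
apply: negligibleS (negligibleU N1 H2).
move=> x [Dx [nD|ne]]; first by left.
by right => /(_ Dx).
Qed.

Definition Ebad (r : kP G) (p : Nk k) := [set z | Rg r z /\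
  ~ exists e, [/\ kr e = ks r, kd e = p & Rg (kcomp r e) z]].

Lemma negl_E r p : mu.-negligible (Ebad r p).
Proof.
pose W e := [set x | D e x /\ (~ D (kcomp r e) x \/ tau r (tau e x) <> tau (kcomp r e) x)].
pose Bx := ~` Cov p `|` [set x | exists e, True /\ (Rg e `\` D (kid (kr e))) x]
  `|` (D r `\` D (kid (ks r)))
  `|` [set x | exists e, kr e <> ks r /\ (D (kid (kr e)) `&` D (kid (ks r))) x]
  `|` [set x | exists e, kr e = ks r /\ (tau e @` (W e `&` D e)) x].
have nB : mu.-negligible Bx.
  apply: negligibleU; [apply: negligibleU; [apply: negligibleU; [apply: negligibleU|]|]|].
  - exact: negl_cover.
  - by apply: negl_countP => e _; exact: negl_RD.
  - exact: negl_DD.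
  - by apply: negl_countP => e H; exact: negl_vv.
  - by apply: negl_countP => e H; apply: img_null; exact: negl_comp.
apply: negligibleS (img_null r nB).
move=> z [[x Dx <-] nE].
exists x => //; split => //.
case: (pselect (Bx x)) => // nBx; exfalso; apply: nE.
have [e [de Re]] : Cov p x.
  by case: (pselect (Cov p x)) => // h; exfalso; apply: nBx; do 4 left.
have h1 : D (kid (kr e)) x.
  case: (pselect (D (kid (kr e)) x)) => // h; exfalso; apply: nBx.
  by do 3 left; right; exists e; split.
have h2 : D (kid (ks r)) x.
  case: (pselect (D (kid (ks r)) x)) => // h; exfalso; apply: nBx.
  by do 2 left; right; split.
have h3 : kr e = ks r.
  case: (pselect (kr e = ks r)) => // h; exfalso; apply: nBx.
  by left; right; exists e; split.
case: Re => w Dw ew.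
have h4 : D (kcomp r e) w.
  case: (pselect (D (kcomp r e) w)) => // h; exfalso; apply: nBx.
  by right; exists e; split => //; exists w => //; split => //; split => //; left.
have h5 : tau r (tau e w) = tau (kcomp r e) w.
  case: (pselect (tau r (tau e w) = tau (kcomp r e) w)) => // h; exfalso; apply: nBx.
  by right; exists e; split => //; exists w => //; split => //; split => //; right.
by exists e; split => //; exists w => //; rewrite -h5 ew.
Qed.

Lemma half (Hsf : source_free G) (l n : kP G) : periodic_pair l n ->
  mu.-negligible (Rg l `\` Rg n).
Proof.
move=> Hper.
pose B := Ebad l (kd n) `|` ~` Cov (kd n)
  `|` [set z | exists v, kd v = kd n /\ Ebad v (kd l) z]
  `|` [set z | exists ab : kP G * kP G, (kd (fst ab) = kd (snd ab) /\ fst ab <> snd ab)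
                /\ (Rg (fst ab) `&` Rg (snd ab)) z].
have nB : mu.-negligible B.
  apply: negligibleU; [apply: negligibleU; [apply: negligibleU|]|].
  - exact: negl_E.
  - exact: negl_cover.
  - by apply: negl_countP => v _; exact: negl_E.
  - by apply: negl_countP => ab [H1 H2]; exact: negl_disj.
apply: negligibleS nB.
move=> z [Rlz nRnz].
case: (pselect (B z)) => // nBz; exfalso.
have [e [he1 he2 he3]] : exists e, [/\ kr e = ks l, kd e = kd n & Rg (kcomp l e) z].
  case: (pselect (exists e, [/\ kr e = ks l, kd e = kd n & Rg (kcomp l e) z])) => // h.
  by exfalso; apply: nBz; do 3 left; split.
have [v [hv1 hv2]] : Cov (kd n) z.
  by case: (pselect (Cov (kd n) z)) => // h; exfalso; apply: nBz; do 2 left; right.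
have [c [hc1 hc2 hc3]] : exists c, [/\ kr c = ks v, kd c = kd l & Rg (kcomp v c) z].
  case: (pselect (exists c, [/\ kr c = ks v, kd c = kd l & Rg (kcomp v c) z])) => // h.
  by exfalso; apply: nBz; left; right; exists v; split => //; split.
have heq : kcomp l e = kcomp v c.
  case: (pselect (kcomp l e = kcomp v c)) => // h; exfalso; apply: nBz.
  right; exists (kcomp l e, kcomp v c) => /=; split; last by split.
  split => //.
  by rewrite (kd_comp (esym he1)) (kd_comp (esym hc1)) he2 hc2 hv1 addNkC.
have [z0 [hz1 hz2 hz3]] := periodic_fact Hsf Hper he1 he2.
have hv1' : kd v = kd v := erefl.
have [E _] := kfactor_uniq (esym hc1) heq hv1 hc2 hz1 hz2 (erefl (kd n)) hz3.
by apply: nRnz; rewrite -E.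
Qed.

End M.

Unset Implicit Arguments.
Local Open Scope classical_set_scope.
Local Open Scope ring_scope.
Local Open Scope ereal_scope.

Theorem proposition4p12 (k : nat) (G : kgraph k)
  (Hrf : row_finite G) (Hsf : source_free G)
  (dsp : measure_display) (T : measurableType dsp) (R : realType)
  (mu : {measure set T -> \bar R})
  (D : kP G -> set T) (tau : kP G -> T -> T) (coding : Nk k -> T -> T)
  (Hsb : semibranching mu D tau coding)
  (l n : kP G) (Hper : periodic_pair l n) :
  mu ((sbfs_range D tau l `\` sbfs_range D tau n)
      `|` (sbfs_range D tau n `\` sbfs_range D tau l)) = 0.
Proof.
have Hper' : periodic_pair n l.
  case: Hper => Hs Hp; split; first by rewrite Hs.
  move=> x Hx Hr; have Hr' : ipath_range x = ks l by rewrite Hr. 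
  have [y [H1 H2]] := Hp x Hx Hr'.
  by exists y.
apply: measure_negligible.
  by apply: measurableU; apply: measurableD; exact: (sb_Rmeas Hsb _).
by apply: negligibleU; apply: (half Hsb Hsf).
Qed.
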